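(* Let $l\geq 1$ and let $c_1,\dots,c_l$ and $d_1,\dots,d_l$ be positive integers. Let $u$ be a vertex of a graph $G$ such that $G$ contains a path $P_{\max\{c_1,\dots,c_l\}+1}$ as a proper subgraph, with $u$ as one of its end vertices. Let $P_{d_1+1},\dots,P_{d_l+1}$ be paths that are mutually vertex-disjoint and vertex-disjoint from $G$, and let $v_i$ be an end vertex of $P_{d_i+1}$ for $i=1,\dots,l$. Then for every $k\geq 0$, $$M_k\big(G(u=v_1)P_{d_1+1}\cdots(u=v_l)P_{d_l+1}\big)\geq M_k(G)+\sum_{i=1}^l\left(M_k(P_{c_i+d_i+1})-M_k(P_{c_i+1})\right).$$
   Context: $P_m$ denotes the path on $m$ vertices. $M_k(H)$ is the number of closed walks of length $k$ in a graph $H$. The coalescence $G(u=v)H$ of vertex-disjoint graphs $G$ and $H$ with respect to a vertex $u$ of $G$ and a vertex $v$ of $H$ is obtained from the disjoint union by identifying $u$ and $v$; $G(u=v_1)P_{d_1+1}\cdots(u=v_l)P_{d_l+1}$ denotes the graph obtained from the disjoint union of $G,P_{d_1+1},\dots,P_{d_l+1}$ by identifying $u,v_1,\dots,v_l$ into a single vertex (i.e. attaching all the paths at $u$ by an end vertex). *)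

(* Defs.v *)
From mathcomp Require Import all_boot all_order all_algebra.
Set Implicit Arguments. Unset Strict Implicit. Unset Printing Implicit Defensive.

Definition simple_graph (T : finType) (e : rel T) : Prop :=
  symmetric e /\ irreflexive e.

(* M_k(H): number of closed walks of length k, i.e. sequences
   w_0, ..., w_k of vertices with w_0 = w_k and w_i ~ w_{i+1}. *)
Definition closed_walks (T : finType) (e : rel T) (k : nat) : nat :=
  #|[set w : {ffun 'I_k.+1 -> T} |
      (w ord0 == w ord_max) &&
      [forall i : 'I_k, e (w (widen_ord (leqnSn k) i)) (w (lift ord0 i))]]|.

Definition path_rel (m : nat) : rel 'I_m :=
  fun i j => (i.+1 == j :> nat) || (j.+1 == i :> nat).
Arguments path_rel m : clear implicits.

(* Non-root vertices of the attached paths: (i, j) with j : 'I_(d i) stands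
   for the vertex of P_{d_i+1} at distance j+1 from the end vertex v_i (= u). *)
Definition pend_vertex (l : nat) (d : 'I_l -> nat) : finType :=
  {i : 'I_l & 'I_(d i)}.

Definition attach_paths_rel (V : finType) (e : rel V) (u : V)
    (l : nat) (d : 'I_l -> nat) : rel (V + pend_vertex d)%type :=
  fun x y =>
    match x, y with
    | inl a, inl b => e a b
    | inl a, inr q => (a == u) && (val (tagged q) == 0)
    | inr q, inl b => (b == u) && (val (tagged q) == 0)
    | inr p, inr q => (tag p == tag q) &&
        (((val (tagged p)).+1 == val (tagged q)) ||
         ((val (tagged q)).+1 == val (tagged p)))
    end.

Definition has_proper_path_at (V : finType) (e : rel V) (u : V) (m : nat) : Prop :=
  exists f : 'I_m.+1 -> V,
    [/\ injective f, f ord0 = u,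
        (forall i : 'I_m, e (f (widen_ord (leqnSn m) i)) (f (lift ord0 i))) &
        ~ ((forall x : V, exists i, f i = x) /\
           (forall x y : V, e x y -> exists i : 'I_m,
              (x = f (widen_ord (leqnSn m) i) /\ y = f (lift ord0 i)) \/
              (y = f (widen_ord (leqnSn m) i) /\ x = f (lift ord0 i))))].

(* Main.v *)
Require Import Defs.
From mathcomp Require Import all_boot all_order all_algebra.
From mathcomp Require Import zify.
Import Order.TTheory GRing.Theory Num.Theory.
Set Implicit Arguments. Unset Strict Implicit. Unset Printing Implicit Defensive.

Definition cw (T : finType) (e : rel T) k (w : {ffun 'I_k.+1 -> T}) : bool :=
  (w ord0 == w ord_max) &&
  [forall i : 'I_k, e (w (widen_ord (leqnSn k) i)) (w (lift ord0 i))].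

Lemma cw_map (T1 T2 : finType) (e1 : rel T1) (e2 : rel T2) (g : T1 -> T2) k
  (w : {ffun 'I_k.+1 -> T1}) :
  (forall a b, e1 a b -> e2 (g a) (g b)) -> cw e1 w -> cw e2 [ffun t => g (w t)].
Proof.
move=> He /andP[/eqP H0 /forallP H]; apply/andP; split; first by rewrite !ffunE H0.
by apply/forallP=> i; rewrite !ffunE; apply: He.
Qed.

Lemma path_count (c d k : nat) :
  (#|[set w : {ffun 'I_k.+1 -> 'I_(c + d).+1} | cw (path_rel (c + d).+1) w]|
   <= #|[set w : {ffun 'I_k.+1 -> 'I_(c + d).+1} | cw (path_rel (c + d).+1) w &&
          [exists t, (c < w t)%N]]|
      + #|[set w : {ffun 'I_k.+1 -> 'I_c.+1} | cw (path_rel c.+1) w]|)%N.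
Proof.
have hle : (c.+1 <= (c + d).+1)%N by rewrite ltnS leq_addr.
pose B := [set w : {ffun 'I_k.+1 -> 'I_(c + d).+1} | cw (path_rel (c + d).+1) w &&
          [exists t, (c < w t)%N]].
pose W := [set w : {ffun 'I_k.+1 -> 'I_c.+1} | cw (path_rel c.+1) w].
rewrite -/B -/W.
set g := fun w : {ffun 'I_k.+1 -> 'I_c.+1} =>
  [ffun t => widen_ord hle (w t)] : {ffun 'I_k.+1 -> 'I_(c + d).+1}.
apply: (leq_trans _ (leq_trans (leq_card_setU B (g @: W)) _)); last first.
  by apply: leq_add => //; apply: leq_imset_card.
apply: subset_leq_card; apply/subsetP => w; rewrite !inE => Hw.
case Hex: [exists t, (c < w t)%N]; first by rewrite Hw.
apply/orP; right.
have Hle : forall t, (w t <= c)%N.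
  by move=> t; move/existsP: Hex => Hn; rewrite leqNgt; apply/negP => Ht; apply: Hn; exists t.
apply/imsetP; exists [ffun t => (inord (w t) : 'I_c.+1)].
  rewrite inE; move: Hw => /andP[/eqP H0 /forallP H]; apply/andP; split.
    by rewrite !ffunE H0.
  apply/forallP => i; rewrite !ffunE /path_rel !inordK ?ltnS ?Hle //; exact: H.
by apply/ffunP => t; rewrite !ffunE; apply: val_inj; rewrite /= inordK // ltnS Hle.
Qed.

Definition phi (V : finType) (u : V) (l : nat) (c d : 'I_l -> nat) (m : nat)
  (f : 'I_m.+1 -> V) (i : 'I_l) (v : 'I_(c i + d i).+1) : (V + pend_vertex d)%type :=
  if (v <= c i)%N then inl (f (inord (c i - v)))
  else oapp (fun o : 'I_(d i) => inr (Tagged (fun j => 'I_(d j)) o)) (inl u)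
         (insub (v - (c i).+1)%N).

Section Phi.
Variables (V : finType) (e : rel V) (u : V) (l : nat) (c d : 'I_l -> nat) (m : nat)
  (f : 'I_m.+1 -> V) (i : 'I_l).

Lemma phi_le (v : 'I_(c i + d i).+1) : (v <= c i)%N -> phi u f v = inl (f (inord (c i - v))).
Proof. by rewrite /phi => ->. Qed.

Lemma phi_gt (v : 'I_(c i + d i).+1) : (c i < v)%N ->
  exists o : 'I_(d i), val o = (v - (c i).+1)%N /\ phi u f v = inr (Tagged (fun j => 'I_(d j)) o).
Proof.
move=> h; have Ho : (v - (c i).+1 < d i)%N by have := ltn_ord v; lia.
exists (Ordinal Ho); split => //.
by rewrite /phi leqNgt h /= insubT.
Qed.

Lemma attach_sym : symmetric e -> symmetric (@attach_paths_rel V e u l d).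
Proof.
move=> He [a|p] [b|q] //=.
by rewrite eq_sym orbC.
Qed.

Hypotheses (He : symmetric e) (Hf0 : f ord0 = u)
  (Hfe : forall j : 'I_m, e (f (widen_ord (leqnSn m) j)) (f (lift ord0 j)))
  (Hc : (c i <= m)%N).

Lemma phi_edge1 (a b : 'I_(c i + d i).+1) : a.+1 = b ->
  @attach_paths_rel V e u l d (phi u f a) (phi u f b).
Proof.
move=> hab; case: (ltngtP a (c i)) => h.
- rewrite !phi_le; try lia.
  have hj : (c i - b < m)%N by lia.
  have := Hfe (Ordinal hj).
  have -> : widen_ord (leqnSn m) (Ordinal hj) = inord (c i - b).
    by apply: val_inj; rewrite /= inordK //; lia.
  have -> : lift ord0 (Ordinal hj) = inord (c i - a).
    by apply: val_inj; rewrite /= /bump /= inordK //; lia.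
  by rewrite /= He.
- have [o [ho ->]] := phi_gt h.
  have [o' [ho' ->]] := @phi_gt b ltac:(lia).
  by rewrite /= eqxx /= ho ho'; apply/orP; left; apply/eqP; lia.
- rewrite phi_le; last lia.
  have [o' [ho' ->]] := @phi_gt b ltac:(lia).
  have -> : (inord (c i - a) : 'I_m.+1) = ord0 by apply: val_inj; rewrite /= inordK; lia.
  by rewrite /= Hf0 eqxx ho' /=; apply/eqP; lia.
Qed.

Lemma phi_edge (a b : 'I_(c i + d i).+1) : path_rel _ a b ->
  @attach_paths_rel V e u l d (phi u f a) (phi u f b).
Proof.
move=> /orP[]/eqP h; first exact: phi_edge1.
by rewrite attach_sym //; apply: phi_edge1.
Qed.

Hypothesis (Hinj : injective f).

Lemma phi_inj (a b : 'I_(c i + d i).+1) : phi u f a = phi u f b -> a = b.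
Proof.
case: (leqP a (c i)) => ha; case: (leqP b (c i)) => hb.
- rewrite !phi_le // => -[] /Hinj /(congr1 val) /=; rewrite !inordK; try lia.
  by move=> h; apply: val_inj; change (nat_of_ord a = nat_of_ord b); lia.
- rewrite phi_le //; have [o [ho ->]] := phi_gt hb; by [].
- rewrite (@phi_le b) //; have [o [ho ->]] := phi_gt ha; by [].
- have [o [ho ->]] := phi_gt ha; have [o' [ho' ->]] := phi_gt hb.
  move=> [] h; have := congr1 (tagged_as (Tagged (fun j => 'I_(d j)) o)) h.
  rewrite !tagged_asE => /(congr1 val); rewrite ho ho' => h2.
  by apply: val_inj; change (nat_of_ord a = nat_of_ord b); lia.
Qed.

End Phi.
Local Open Scope ring_scope.

Theorem corollary1 (l : nat) (c d : 'I_l -> nat) (V : finType) (e : rel V) (u : V) :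
  (1 <= l)%N ->
  (forall i, (0 < c i)%N) -> (forall i, (0 < d i)%N) ->
  simple_graph e ->
  has_proper_path_at e u (\max_(i < l) c i)%N ->
  forall k : nat,
    (closed_walks e k)%:Z +
      \sum_(i < l) ((closed_walks (path_rel (c i + d i).+1) k)%:Z
                    - (closed_walks (path_rel (c i).+1) k)%:Z)
    <= (closed_walks (@attach_paths_rel V e u l d) k)%:Z.
Proof.
move=> _ _ _ [He Hirr] [f [Hinj Hf0 Hfe _]] k.
have Hc : forall i, (c i <= \max_(i < l) c i)%N by move=> i; apply: leq_bigmax.
pose B i := [set w : {ffun 'I_k.+1 -> 'I_(c i + d i).+1} | cw (path_rel (c i + d i).+1) w &&
          [exists t, (c i < w t)%N]].
pose X := ({ffun 'I_k.+1 -> V} + {i : 'I_l & {ffun 'I_k.+1 -> 'I_(c i + d i).+1}})%type.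
pose domP (x : X) : bool := match x with
  | inl w => cw e w
  | inr p => cw (path_rel _) (tagged p) && [exists t, (c (tag p) < tagged p t)%N] end.
pose F (x : X) : {ffun 'I_k.+1 -> (V + pend_vertex d)%type} := match x with
  | inl w => [ffun t => inl (w t)]
  | inr p => [ffun t => @phi V u l c d _ f (tag p) (tagged p t)] end.
have key : (#|[set x : X | domP x]| <= closed_walks (@attach_paths_rel V e u l d) k)%N.
  rewrite -(@card_in_imset _ _ F); last first.
    move=> [w|[i w]] [w'|[j w']]; rewrite !inE /=.
    - move=> _ _ /ffunP H; congr inl; apply/ffunP => t.
      by have := H t; rewrite !ffunE => -[].
    - move=> _ /andP[_ /existsP[t ht]] /ffunP /(_ t); rewrite !ffunE.
      by have [o [_ ->]] := phi_gt u f ht.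
    - move=> /andP[_ /existsP[t ht]] _ /ffunP /(_ t); rewrite !ffunE.
      by have [o [_ ->]] := phi_gt u f ht.
    - move=> /andP[_ /existsP[t ht]] _ /ffunP H.
      have := H t; rewrite !ffunE; have [o [_ ->]] := phi_gt u f ht.
      case: (leqP (w' t) (c j)) => h'; first by rewrite phi_le.
      have [o' [_ ->]] := phi_gt u f h'.
      move=> /(congr1 (fun x : (V + pend_vertex d)%type =>
                         if x is inr p then tag p else i)) /= hij.
      subst j; congr (inr (Tagged _ _)); apply/ffunP => s.
      by have := H s; rewrite !ffunE => /(phi_inj (Hc i) Hinj).
  apply: subset_leq_card; apply/subsetP => _ /imsetP[x Hx ->]; rewrite inE.
  case: x Hx => [w|[i w]]; rewrite inE /= => Hw.
    by apply: (@cw_map _ _ e _ inl).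
  move: Hw => /andP[Hw _]; apply: (cw_map _ Hw) => a b.
  exact: phi_edge.
have cnt : #|[set x : X | domP x]| = (closed_walks e k + \sum_i #|B i|)%N.
  rewrite -sum1_card (eq_bigl domP); last by move=> x; rewrite inE.
  rewrite big_sumType /=; congr (_ + _)%N.
    by rewrite /closed_walks -sum1_card; apply: eq_bigl => w; rewrite inE.
  pose Q := fun i (w : {ffun 'I_k.+1 -> 'I_(c i + d i).+1}) =>
    cw (path_rel (c i + d i).+1) w && [exists t, (c i < w t)%N].
  rewrite -(@sig_big_dep _ _ _ 'I_l (fun i => {ffun 'I_k.+1 -> 'I_(c i + d i).+1})
     xpredT Q (fun _ _ => 1%N)).
  by apply: eq_bigr => i _; rewrite -sum1_card; apply: eq_bigl => w; rewrite inE.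
apply: (le_trans _ (_ : ((closed_walks e k + \sum_i #|B i|)%N)%:Z <= _)); last first.
  by rewrite lez_nat -cnt.
rewrite PoszD lerD2l -natz natr_sum.
apply: ler_sum => i _; rewrite natz lerBlDr -PoszD lez_nat.
exact: path_count.
Qed.
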